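(* Let $0<\beta<1$, $T>0$, $n_T$ a positive integer, $\tau=T/n_T$, $t_k=k\tau$. Let $\varpi_j$ be defined by $(1-z)^\beta=\sum_{j\ge0}\varpi_j z^j$, $\varrho_j$ by $(1-z)^{-\beta}=\sum_{j\ge0}\varrho_jz^j$, $P_j:=\tau^\beta\varrho_j$, and for a sequence $w^0,\dots,w^{n_T}$ let $D_\tau^{(\beta)}w^k=\tau^{-\beta}\sum_{j=0}^k\varpi_{k-j}(w^j-w^0)$. Let $\{g^k\}_{k=0}^{n_T}$ and $\{\lambda_l\}_{l=0}^{n_T-1}$ be non-negative sequences, and assume there is a constant $\lambda$ independent of $\tau$ with $\lambda\ge\sum_{l=0}^{k-1}\lambda_l$ for $1\le k\le n_T$ and $\tau\le 1/\sqrt[\beta]{2\lambda(1+\beta)}$. Then for any non-negative sequence $\{v^k\}_{k=0}^{n_T}$ satisfying $$D_\tau^{(\beta)}v^k\le\sum_{l=1}^k\lambda_{k-l}v^l+g^k,\qquad 1\le k\le n_T,$$ it holds that $$v^k\le 2E_\beta(2\lambda t_k^\beta)\Big(v^0+\max_{1\le m\le k}\sum_{j=0}^mP_{m-j}\,g^{j}\Big),\qquad 1\le k\le n_T,$$ where $E_\beta(z)=\sum_{l=0}^\infty\frac{z^l}{\Gamma(1+l\beta)}$. *)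

(* Defs.v *)
From Stdlib Require Import Reals Lra Factorial.
From Coquelicot Require Import Coquelicot.
Open Scope R_scope.

Definition Gamma (s : R) : R :=
  RInt_gen (fun t => Rpower t (s - 1) * exp (- t)) (at_right 0) (Rbar_locally p_infty).

Definition mittag_leffler (beta z : R) : R :=
  Series (fun l => z ^ l / Gamma (1 + INR l * beta)).

Fixpoint falling (a : R) (j : nat) : R :=
  match j with O => 1 | S j' => falling a j' * (a - INR j') end.
Definition gbinom (a : R) (j : nat) : R := falling a j / INR (Factorial.fact j).

(* Coefficients of (1-z)^beta = sum_j varpi_j z^j, i.e. varpi_j = (-1)^j binom(beta,j). *)
Definition varpi (beta : R) (j : nat) : R := (-1) ^ j * gbinom beta j.
(* Coefficients of (1-z)^(-beta) = sum_j varrho_j z^j, i.e. varrho_j = (-1)^j binom(-beta,j). *)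
Definition varrho (beta : R) (j : nat) : R := (-1) ^ j * gbinom (- beta) j.

Definition Dtau (beta tau : R) (w : nat -> R) (k : nat) : R :=
  / Rpower tau beta * sum_f_R0 (fun j => varpi beta (k - j) * (w j - w O)) k.

(* max_{1 <= m <= k} f m  (for k >= 1). *)
Fixpoint max_from1 (f : nat -> R) (k : nat) : R :=
  match k with
  | O => f 1%nat
  | S O => f 1%nat
  | S k' => Rmax (max_from1 f k') (f k)
  end.

(* Main.v *)
Require Import Defs.
From Stdlib Require Import Reals Lra Lia Factorial.
From Coquelicot Require Import Coquelicot.
Open Scope R_scope.

Fixpoint ssum (f : nat -> R) (n : nat) : R :=
  match n with O => 0 | S n' => ssum f n' + f n' end.

Lemma ssum_f_R0 f n : sum_f_R0 f n = ssum f (S n).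
Proof. induction n; simpl in *; [lra|]. rewrite IHn. simpl. lra. Qed.

Lemma ssum_ext f g n : (forall i, (i < n)%nat -> f i = g i) -> ssum f n = ssum g n.
Proof. induction n; intros H; simpl; [lra|]. rewrite IHn by (intros; apply H; lia). rewrite H by lia. lra. Qed.

Lemma ssum_le f g n : (forall i, (i < n)%nat -> f i <= g i) -> ssum f n <= ssum g n.
Proof. induction n; intros H; simpl; [lra|]. pose proof (IHn (fun i Hi => H i ltac:(lia))). pose proof (H n ltac:(lia)). lra. Qed.

Lemma ssum_nonneg f n : (forall i, (i < n)%nat -> 0 <= f i) -> 0 <= ssum f n.
Proof. intros H. replace 0 with (ssum (fun _ => 0) n). apply ssum_le; auto.
 induction n; simpl; auto. rewrite IHn. lra. intros; apply H; lia. Qed.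

Lemma ssum_zero f n : (forall i, (i < n)%nat -> f i = 0) -> ssum f n = 0.
Proof. induction n; intros H; simpl; [lra|]. rewrite IHn by (intros; apply H; lia). rewrite H by lia. lra. Qed.

Lemma ssum_plus f g n : ssum (fun i => f i + g i) n = ssum f n + ssum g n.
Proof. induction n; simpl; [lra|]. rewrite IHn. lra. Qed.

Lemma ssum_scal c f n : ssum (fun i => c * f i) n = c * ssum f n.
Proof. induction n; simpl; [lra|]. rewrite IHn. lra. Qed.

Lemma ssum_shift f n : ssum f (S n) = f O + ssum (fun i => f (S i)) n.
Proof. induction n; simpl in *; [lra|]. rewrite IHn. lra. Qed.

Lemma ssum_rev f n : ssum (fun i => f (n - S i)%nat) n = ssum f n.
Proof. induction n; [reflexivity|].
 rewrite ssum_shift. replace (S n - 1)%nat with n by lia.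
 rewrite (ssum_ext _ (fun i => f (n - S i)%nat)) by (intros; f_equal; lia).
 rewrite IHn. simpl. lra. Qed.

Lemma ssum_swap (F : nat -> nat -> R) n m :
  ssum (fun j => ssum (fun l => F j l) m) n = ssum (fun l => ssum (fun j => F j l) n) m.
Proof. induction n; simpl.
 - symmetry; apply ssum_zero; auto.
 - rewrite IHn. rewrite <- ssum_plus. reflexivity. Qed.

Lemma ssum_tri (F : nat -> nat -> R) n :
  ssum (fun j => ssum (fun i => F i j) (S j)) n =
  ssum (fun i => ssum (fun m => F i (i + m)%nat) (n - i)) n.
Proof. induction n; [reflexivity|].
 transitivity (ssum (fun j => ssum (fun i => F i j) (S j)) n + ssum (fun i => F i n) (S n)); [reflexivity|].
 rewrite IHn.
 transitivity (ssum (fun i => ssum (fun m => F i (i+m)%nat) (S n - i)) n + ssum (fun m => F n (n+m)%nat) (S n - n)); [|reflexivity].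
 replace (S n - n)%nat with 1%nat by lia.
 rewrite (ssum_ext (fun i => ssum (fun m => F i (i + m)%nat) (S n - i))
    (fun i => ssum (fun m => F i (i + m)%nat) (n - i) + F i n)).
 rewrite ssum_plus. simpl. rewrite Nat.add_0_r. lra.
 intros i Hi. replace (S n - i)%nat with (S (n - i)) by lia. simpl. do 2 f_equal. lia. Qed.

Lemma ssum_prefix f l N : (forall j, (j < l)%nat -> f j = 0) ->
  ssum f (l + N) = ssum (fun i => f (l + i)%nat) N.
Proof. intros H. induction N.
 - rewrite Nat.add_0_r. apply ssum_zero; auto.
 - replace (l + S N)%nat with (S (l + N)) by lia. simpl. rewrite IHN. reflexivity. Qed.

Lemma ssum_mono_len f n m : (forall i, 0 <= f i) -> (n <= m)%nat -> ssum f n <= ssum f m.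
Proof. intros H Hnm. induction Hnm; [lra|]. simpl. specialize (H m). lra. Qed.

Fixpoint rr (a : R) (n : nat) : R :=
  match n with O => 1 | S n' => rr a n' * (a + INR n') / INR (S n') end.

Lemma rr_S a n : INR (S n) * rr a (S n) = rr a n * (a + INR n).
Proof. change (rr a (S n)) with (rr a n * (a + INR n) / INR (S n)). field. apply not_0_INR; lia. Qed.

Lemma ssum_S f n : ssum f (S n) = ssum f n + f n.
Proof. reflexivity. Qed.

Lemma vandermonde a b n :
  ssum (fun i => rr a i * rr b (n - i)%nat) (S n) = rr (a + b) n.
Proof.
 induction n.
 - simpl. lra.
 - assert (Hn : INR (S n) <> 0) by (apply not_0_INR; lia).
   assert (INR (S n) * ssum (fun i => rr a i * rr b (S n - i)%nat) (S (S n))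
      = (a + b + INR n) * rr (a+b) n).
   { rewrite <- IHn. rewrite <- ssum_scal.
     rewrite (ssum_ext _ (fun i => INR i * (rr a i * rr b (S n - i)%nat)
                         + INR (S n - i) * (rr a i * rr b (S n - i)%nat))).
     2:{ intros i Hi. rewrite <- Rmult_plus_distr_r. f_equal. rewrite <- plus_INR. f_equal. lia. }
     rewrite ssum_plus.
     set (A := ssum (fun i => INR i * (rr a i * rr b (S n - i)%nat)) (S (S n))).
     set (B := ssum (fun i => INR (S n - i) * (rr a i * rr b (S n - i)%nat)) (S (S n))).
     assert (HA : A = ssum (fun i => (a + INR i) * (rr a i * rr b (n - i)%nat)) (S n)).
     { unfold A. rewrite ssum_shift. simpl INR at 1. rewrite Rmult_0_l, Rplus_0_l.
       apply ssum_ext. intros i Hi. simpl (S n - S i)%nat. rewrite <- Rmult_assoc, rr_S. ring. }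
     assert (HB : B = ssum (fun i => (b + INR (n - i)) * (rr a i * rr b (n - i)%nat)) (S n)).
     { unfold B. rewrite ssum_S. replace (S n - S n)%nat with O by lia. simpl INR at 2.
       rewrite Rmult_0_l, Rplus_0_r.
       apply ssum_ext. intros i Hi. replace (S n - i)%nat with (S (n - i)) by lia.
       rewrite Rmult_comm, Rmult_assoc, (Rmult_comm _ (INR _)), rr_S. ring. }
     rewrite HA, HB, <- ssum_plus, <- ssum_scal. apply ssum_ext. intros i Hi.
     rewrite minus_INR by lia. ring. }
   change (rr (a + b) (S n)) with (rr (a+b) n * (a + b + INR n) / INR (S n)).
   apply (Rmult_eq_reg_l (INR (S n))); auto. rewrite H. field. auto.
Qed.
Lemma varrho_rr b n : varrho b n = rr b n.
Proof. induction n.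
 - unfold varrho, gbinom. simpl. lra.
 - unfold varrho, gbinom in *. simpl falling. rewrite fact_simpl, mult_INR.
   change (rr b (S n)) with (rr b n * (b + INR n) / INR (S n)). rewrite <- IHn.
   assert (INR (fact n) <> 0) by apply INR_fact_neq_0.
   assert (INR (S n) <> 0) by (apply not_0_INR; lia).
   simpl pow. field. auto. Qed.

Lemma varpi_rr b n : varpi b n = rr (- b) n.
Proof. induction n.
 - unfold varpi, gbinom. simpl. lra.
 - unfold varpi, gbinom in *. simpl falling. rewrite fact_simpl, mult_INR.
   change (rr (-b) (S n)) with (rr (-b) n * (-b + INR n) / INR (S n)). rewrite <- IHn.
   assert (INR (fact n) <> 0) by apply INR_fact_neq_0.
   assert (INR (S n) <> 0) by (apply not_0_INR; lia).
   simpl pow. field. auto. Qed.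

Lemma rr_nonneg a n : 0 <= a -> 0 <= rr a n.
Proof. intros Ha. induction n; [simpl; lra|].
 change (rr a (S n)) with (rr a n * (a + INR n) / INR (S n)).
 apply Rmult_le_pos. apply Rmult_le_pos; auto. pose proof (pos_INR n); lra.
 left; apply Rinv_0_lt_compat, lt_0_INR; lia. Qed.

Lemma rr_decr b n : 0 <= b <= 1 -> rr b (S n) <= rr b n.
Proof. intros Hb. change (rr b (S n)) with (rr b n * (b + INR n) / INR (S n)).
 pose proof (rr_nonneg b n ltac:(lra)). rewrite S_INR. pose proof (pos_INR n).
 unfold Rdiv. rewrite Rmult_assoc. rewrite <- (Rmult_1_r (rr b n)) at 2.
 apply Rmult_le_compat_l; auto. apply (Rmult_le_reg_r (INR n + 1)); [lra|].
 rewrite Rmult_assoc, Rinv_l by lra. lra. Qed.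

Lemma rr0_S n : rr 0 (S n) = 0.
Proof. induction n. simpl. lra.
 change (rr 0 (S (S n))) with (rr 0 (S n) * (0 + INR (S n)) / INR (S (S n))). rewrite IHn. lra. Qed.

Lemma conv_identity b (u : nat -> R) k :
  ssum (fun j => varrho b (k - j) * ssum (fun i => varpi b (j - i) * u i) (S j)) (S k) = u k.
Proof.
 rewrite (ssum_ext _ (fun j => ssum (fun i => varrho b (k - j) * (varpi b (j - i) * u i)) (S j)))
   by (intros; rewrite ssum_scal; reflexivity).
 rewrite (ssum_tri (fun i j => varrho b (k - j) * (varpi b (j - i) * u i)) (S k)).
 rewrite (ssum_ext _ (fun i => u i * (if Nat.eq_dec i k then 1 else 0))).
 - rewrite ssum_S. rewrite ssum_zero. destruct (Nat.eq_dec k k); [lra|congruence].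
   intros i Hi. destruct (Nat.eq_dec i k); [lia|lra].
 - intros i Hi.
   rewrite (ssum_ext _ (fun m => u i * (rr (-b) m * rr b ((k - i) - m)%nat))).
   2:{ intros m Hm. rewrite varrho_rr, varpi_rr. replace (i + m - i)%nat with m by lia.
       replace (k - (i + m))%nat with (k - i - m)%nat by lia. ring. }
   rewrite ssum_scal. replace (S k - i)%nat with (S (k - i)) by lia.
   rewrite vandermonde. replace (-b + b) with 0 by ring.
   destruct (Nat.eq_dec i k). subst. replace (k - k)%nat with O by lia. simpl. ring.
   replace (k - i)%nat with (S (k - i - 1)) by lia. rewrite rr0_S. ring.
Qed.
Lemma rr1 n : rr 1 n = 1.
Proof. induction n; [reflexivity|].
 change (rr 1 (S n)) with (rr 1 n * (1 + INR n) / INR (S n)). rewrite IHn, S_INR.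
 field. pose proof (pos_INR n); lra. Qed.

Fixpoint cc (b : R) (l : nat) (K : nat) : R :=
  match l with O => 1 | S l' => ssum (fun j => rr b (K - j) * cc b l' j) K end.

Lemma cc_zero b l K : (K < l)%nat -> cc b l K = 0.
Proof. revert K; induction l; intros K H; [lia|]. simpl. apply ssum_zero.
 intros j Hj. rewrite IHl by lia. ring. Qed.

Lemma cc_nonneg b l K : 0 <= b -> 0 <= cc b l K.
Proof. intros Hb; revert K; induction l; intros K; simpl; [lra|].
 apply ssum_nonneg; intros. apply Rmult_le_pos; auto. apply rr_nonneg; auto. Qed.

Lemma cc_bound b l K : 0 <= b <= 1 -> (l <= K)%nat -> cc b l K <= rr (1 + INR l * b) (K - l).
Proof. intros Hb. revert K; induction l; intros K HK.
 - simpl. replace (1 + 0 * b) with 1 by ring. rewrite rr1. lra.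
 - simpl cc. destruct K as [|K]; [lia|].
   set (N := (K - l)%nat). replace (S K) with (l + S N)%nat by (unfold N; lia).
   rewrite ssum_prefix by (intros j Hj; rewrite cc_zero by lia; ring).
   replace (l + S N - S l)%nat with N by lia.
   rewrite S_INR. replace (1 + (INR l + 1) * b) with ((1 + INR l * b) + b) by ring.
   rewrite <- vandermonde.
   apply ssum_le. intros i Hi.
   replace (l + S N - (l + i))%nat with (S (N - i)) by lia.
   rewrite Rmult_comm. apply Rmult_le_compat.
   + apply cc_nonneg; lra.
   + apply rr_nonneg; lra.
   + replace i with (l + i - l)%nat at 2 by lia. apply IHl. lia.
   + apply rr_decr; auto.
Qed.

Fixpoint Wm (V : nat -> R) (K : nat) : R :=
  match K with O => V O | S K' => Rmax (Wm V K') (V (S K')) end.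

Lemma Wm_ge V K i : (i <= K)%nat -> V i <= Wm V K.
Proof. induction K; intros H. replace i with O by lia. simpl; lra.
 simpl. destruct (Nat.eq_dec i (S K)). subst. apply Rmax_r.
 eapply Rle_trans; [apply IHK; lia|apply Rmax_l]. Qed.

Lemma Wm_le V K X : (forall i, (i <= K)%nat -> V i <= X) -> Wm V K <= X.
Proof. induction K; intros H; simpl. apply H; lia.
 apply Rmax_lub. apply IHK; intros; apply H; lia. apply H; lia. Qed.

Lemma Wm_mono V i K : (i <= K)%nat -> Wm V i <= Wm V K.
Proof. intros H. apply Wm_le. intros j Hj. apply Wm_ge. lia. Qed.

Lemma conv_step b W i : 0 <= b -> (forall j, (j <= S i)%nat -> 0 <= W j) ->
  (forall j, (j < S i)%nat -> W j <= W (S j)) ->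
  ssum (fun j => rr b (i - j) * W j) (S i) <= ssum (fun j => rr b (S i - j) * W j) (S (S i)).
Proof. intros Hb H0 Hm. rewrite (ssum_shift _ (S i)).
 assert (0 <= rr b (S i - 0) * W O) by (apply Rmult_le_pos; [apply rr_nonneg; auto| apply H0; lia]).
 assert (ssum (fun j => rr b (i - j) * W j) (S i) <= ssum (fun j => rr b (S i - S j) * W (S j)) (S i)).
 { apply ssum_le. intros j Hj. simpl (S i - S j)%nat. apply Rmult_le_compat_l.
   apply rr_nonneg; auto. apply Hm; lia. }
 lra. Qed.

Lemma conv_mono b W i K : 0 <= b -> (forall j, (j <= K)%nat -> 0 <= W j) ->
  (forall j, (j < K)%nat -> W j <= W (S j)) -> (i <= K)%nat ->
  ssum (fun j => rr b (i - j) * W j) (S i) <= ssum (fun j => rr b (K - j) * W j) (S K).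
Proof. intros Hb H0 Hm HiK. revert H0 Hm. induction HiK; intros H0 Hm; [lra|].
 eapply Rle_trans.
 { apply IHHiK; intros; [apply H0|apply Hm]; lia. }
 apply conv_step; [auto| intros; apply H0; lia | intros; apply Hm; lia].
Qed.

Definition YY b x N K := ssum (fun l => (2 * x) ^ l * cc b l K) (S N).

Lemma YY_rec b x N K : (K <= N)%nat ->
  YY b x N K = 1 + 2 * x * ssum (fun j => rr b (K - j) * YY b x N j) K.
Proof. intros HK. unfold YY.
 rewrite (ssum_ext (fun j => rr b (K - j) * ssum (fun l => (2 * x) ^ l * cc b l j) (S N))
   (fun j => ssum (fun l => (2 * x) ^ l * (rr b (K - j) * cc b l j)) (S N))).
 2:{ intros; rewrite <- ssum_scal. apply ssum_ext; intros; ring. }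
 rewrite ssum_swap.
 rewrite (ssum_ext (fun l => ssum (fun j => (2 * x) ^ l * (rr b (K - j) * cc b l j)) K)
   (fun l => (2 * x) ^ l * cc b (S l) K)).
 2:{ intros; rewrite ssum_scal. reflexivity. }
 rewrite <- ssum_scal.
 assert (E : ssum (fun l => (2 * x) ^ l * cc b l K) (S (S N)) =
    ssum (fun l => (2 * x) ^ l * cc b l K) (S N)).
 { rewrite ssum_S. rewrite (cc_zero b (S N) K) by lia. ring. }
 rewrite <- E. rewrite ssum_shift. simpl cc at 1. simpl pow at 1. f_equal; [ring|].
 apply ssum_ext; intros. simpl pow. ring. Qed.

Lemma YY_nonneg b x N K : 0 <= b -> 0 <= x -> 0 <= YY b x N K.
Proof. intros. unfold YY. apply ssum_nonneg; intros. apply Rmult_le_pos.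
 apply pow_le; lra. apply cc_nonneg; auto. Qed.

Lemma disc_gronwall b x N (V F : nat -> R) :
  0 <= b <= 1 -> 0 <= x <= 1/2 ->
  (forall K, (K <= N)%nat -> 0 <= V K) ->
  (forall K, (K <= N)%nat -> 0 <= F K) ->
  (forall K, (K < N)%nat -> F K <= F (S K)) ->
  (forall K, (K <= N)%nat ->
     V K <= F K + x * ssum (fun j => rr b (K - j) * Wm V j) (S K)) ->
  forall K, (K <= N)%nat -> V K <= 2 * F K * YY b x N K.
Proof.
 intros Hb Hx HV HF HFm Hrec.
 assert (HW0 : forall j, (j <= N)%nat -> 0 <= Wm V j).
 { intros j Hj. eapply Rle_trans; [apply (HV O); lia|apply Wm_ge; lia]. }
 assert (HWm : forall j, (j < N)%nat -> Wm V j <= Wm V (S j)) by (intros; apply Wm_mono; lia).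
 assert (HFmono : forall i K, (i <= K)%nat -> (K <= N)%nat -> F i <= F K).
 { intros i K H1 H2. induction H1; [lra|]. eapply Rle_trans; [apply IHle; lia|apply HFm; lia]. }
 assert (S1 : forall K, (K <= N)%nat ->
    Wm V K <= F K + x * ssum (fun j => rr b (K - j) * Wm V j) (S K)).
 { intros K HK. apply Wm_le. intros i Hi. eapply Rle_trans; [apply Hrec; lia|].
   apply Rplus_le_compat. apply HFmono; lia. apply Rmult_le_compat_l; [lra|].
   apply conv_mono; [lra | intros; apply HW0; lia | intros; apply HWm; lia | lia]. }
 assert (S3 : forall K, (K <= N)%nat -> Wm V K <= 2 * F K * YY b x N K).
 { intros K. induction K as [K IH] using (well_founded_induction Wf_nat.lt_wf). intros HK.
   pose proof (S1 K HK) as H1. rewrite ssum_S in H1. replace (K - K)%nat with O in H1 by lia.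
   simpl rr in H1. 
   set (Sm := ssum (fun j => rr b (K - j) * Wm V j) K) in *.
   assert (HSm : 0 <= Sm). { apply ssum_nonneg; intros. apply Rmult_le_pos. apply rr_nonneg; lra. apply HW0; lia. }
   assert (H2 : Wm V K <= 2 * F K + 2 * x * Sm).
   { pose proof (HF K HK). pose proof (HW0 K HK). nra. }
   assert (H3 : Sm <= ssum (fun j => rr b (K - j) * (2 * F K * YY b x N j)) K).
   { apply ssum_le; intros j Hj. apply Rmult_le_compat_l. apply rr_nonneg; lra.
     eapply Rle_trans; [apply IH; lia|]. apply Rmult_le_compat_r. apply YY_nonneg; lra.
     apply Rmult_le_compat_l; [lra|]. apply HFmono; lia. }
   rewrite (ssum_ext _ (fun j => 2 * F K * (rr b (K - j) * YY b x N j))) in H3 by (intros; ring).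
   rewrite ssum_scal in H3. rewrite YY_rec by auto.
   pose proof (HF K HK). nra. }
 intros K HK. eapply Rle_trans; [apply (Wm_ge V K K); lia|]. apply S3; auto.
Qed.
Lemma ball_R (x y eps : R) : ball x eps y <-> Rabs (y - x) < eps.
Proof. reflexivity. Qed.

Definition FA := at_right 0.
Definition FB := Rbar_locally p_infty.

Lemma FA_pos : at_right 0 (fun a => 0 < a).
Proof. exists (mkposreal 1 Rlt_0_1). intros y _ Hy. exact Hy. Qed.

Lemma FA_lt (c : R) : 0 < c -> at_right 0 (fun a => 0 < a < c).
Proof. intros Hc. exists (mkposreal c Hc). intros y Hy Hy0. split; auto.
 assert (H' : Rabs (y - 0) < c) by exact Hy. rewrite Rminus_0_r, Rabs_pos_eq in H'; simpl in *; lra. Qed.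

Lemma FB_gt (c : R) : Rbar_locally p_infty (fun b => c < b).
Proof. exists c. intros; auto. Qed.

Lemma monotone_ex (f : R -> R) M :
  (forall x, 0 < x -> continuous f x) -> (forall x, 0 < x -> 0 <= f x) ->
  (forall a b, 0 < a -> a <= b -> RInt f a b <= M) ->
  ex_RInt_gen f (at_right 0) (Rbar_locally p_infty).
Proof.
 intros Hc Hp HM.
 assert (Hex : forall a b, 0 < a -> 0 < b -> ex_RInt f a b).
 { intros a b Ha Hb. apply (ex_RInt_continuous (V:=R_CompleteNormedModule)). intros z Hz. apply Hc.
   eapply Rlt_le_trans; [|apply Hz]. apply Rmin_glb_lt; auto. }
 set (E := fun y => exists a b, 0 < a <= b /\ y = RInt f a b).
 assert (Hb : bound E). { exists M. intros y [a [b [Hab ->]]]. apply HM; lra. }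
 assert (Hne : exists y, E y). { exists (RInt f 1 1). exists 1, 1. split; [lra|auto]. }
 destruct (completeness E Hb Hne) as [S [HS1 HS2]].
 exists S. intros P [eps Heps].
 assert (H0 : exists a0 b0, 0 < a0 <= b0 /\ S - eps < RInt f a0 b0).
 { apply Classical_Prop.NNPP. intros Hn.
   assert (S <= S - eps). { apply HS2. intros y [a [b [Hab ->]]].
     apply Rnot_lt_le. intros Hl. apply Hn. exists a, b; auto. }
   destruct eps; simpl in *; lra. }
 destruct H0 as [a0 [b0 [Hab0 Hlt]]].
 apply (Filter_prod _ _ _ (fun a => 0 < a < a0) (fun b => b0 < b)).
 - apply FA_lt; lra.
 - apply FB_gt.
 - intros a b Ha Hbb. exists (RInt f a b). split.
   + apply (RInt_correct (V:=R_CompleteNormedModule)). apply Hex; lra.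
   + apply Heps. apply ball_R. simpl.
     assert (Hle : RInt f a b <= S) by (apply HS1; exists a, b; split; [lra|auto]).
     assert (Hge : RInt f a0 b0 <= RInt f a b).
     { rewrite <- (RInt_Chasles f a a0 b) by (apply Hex; lra).
       rewrite <- (RInt_Chasles f a0 b0 b) by (apply Hex; lra).
       assert (0 <= RInt f a a0) by (apply RInt_ge_0; [lra|apply Hex; lra|intros; apply Hp; lra]).
       assert (0 <= RInt f b0 b) by (apply RInt_ge_0; [lra|apply Hex; lra|intros; apply Hp; lra]).
       unfold plus; simpl. lra. }
     rewrite Rabs_left1 by lra. destruct eps; simpl in *; lra.
Qed.

Lemma gen_FTC (F f : R -> R) la lb :
  (forall x, 0 < x -> is_derive F x (f x)) -> (forall x, 0 < x -> continuous f x) ->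
  filterlim F (at_right 0) (locally la) -> filterlim F (Rbar_locally p_infty) (locally lb) ->
  is_RInt_gen f (at_right 0) (Rbar_locally p_infty) (lb - la).
Proof.
 intros Hd Hc Ha Hb.
 assert (HP : filter_prod (at_right 0) (Rbar_locally p_infty) (fun ab => 0 < fst ab /\ 0 < snd ab)).
 { apply (Filter_prod _ _ _ (fun a => 0 < a) (fun b => 0 < b)); [apply FA_pos|apply FB_gt|]. simpl; auto. }
 apply (is_RInt_gen_ext (Derive F)).
 - eapply filter_imp; [|exact HP]. intros [a b] [H1 H2] x Hx. simpl in *.
   apply is_derive_unique. apply Hd. eapply Rlt_trans; [|apply Hx]. apply Rmin_glb_lt; auto.
 - apply is_RInt_gen_Derive; auto.
   + eapply filter_imp; [|exact HP]. intros [a b] [H1 H2] x Hx. simpl in *.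
     eexists. apply Hd. eapply Rlt_le_trans; [|apply Hx]. apply Rmin_glb_lt; auto.
   + eapply filter_imp; [|exact HP]. intros [a b] [H1 H2] x Hx. simpl in *.
     assert (Hx0 : 0 < x) by (eapply Rlt_le_trans; [|apply Hx]; apply Rmin_glb_lt; auto).
     apply (continuous_ext_loc _ f).
     * exists (mkposreal x Hx0). intros y Hy.
       symmetry. apply is_derive_unique. apply Hd. assert (Hy2 : Rabs (y - x) < x) by exact Hy. apply Rabs_lt_between in Hy2. lra.
     * apply Hc; auto.
Qed.

Lemma gen_nonneg (h : R -> R) l :
  (forall x, 0 < x -> 0 <= h x) -> is_RInt_gen h (at_right 0) (Rbar_locally p_infty) l -> 0 <= l.
Proof. intros Hh Hl.
 assert (norm l <= l).
 { apply (RInt_gen_norm (V:=R_CompleteNormedModule) (Fa := at_right 0) (Fb := Rbar_locally p_infty) h h l l); auto.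
   - apply (Filter_prod _ _ _ (fun a => 0 < a < 1) (fun b => 1 < b)); [apply FA_lt; lra|apply FB_gt|]. simpl; intros; lra.
   - apply (Filter_prod _ _ _ (fun a => 0 < a) (fun b => 0 < b)); [apply FA_pos|apply FB_gt|].
     simpl. intros a b Ha Hb x Hx. unfold norm; simpl. unfold abs; simpl.
     rewrite Rabs_pos_eq; [lra|]. apply Hh; lra. }
 unfold norm in H; simpl in H; unfold abs in H; simpl in H. pose proof (Rabs_pos l). lra.
Qed.

Lemma gen_le (f g : R -> R) lf lg :
  (forall x, 0 < x -> f x <= g x) ->
  is_RInt_gen f (at_right 0) (Rbar_locally p_infty) lf ->
  is_RInt_gen g (at_right 0) (Rbar_locally p_infty) lg -> lf <= lg.
Proof. intros H Hf Hg.
 pose proof (is_RInt_gen_minus g f lg lf Hg Hf) as Hm.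
 apply gen_nonneg in Hm. unfold minus, plus, opp in Hm; simpl in Hm. lra.
 intros x Hx. unfold minus, plus, opp; simpl. specialize (H x Hx). lra.
Qed.
Lemma exp_le x y : x <= y -> exp x <= exp y.
Proof. intros [H|H]; [left; apply exp_increasing; auto|subst; lra]. Qed.

Lemma ex_derive_cont_R (f : R -> R) x : ex_derive f x -> continuous f x.
Proof. apply (ex_derive_continuous (K:=R_AbsRing) (V:=R_NormedModule)). Qed.

Lemma Rpow_pos x p : 0 < Rpower x p.
Proof. unfold Rpower. apply exp_pos. Qed.

Lemma is_derive_Rpower p x : 0 < x -> is_derive (fun t => Rpower t p) x (p * Rpower x (p - 1)).
Proof. intros Hx. apply is_derive_Reals. apply derivable_pt_lim_power; auto. Qed.

Definition fp (p : R) := fun t => Rpower t p * exp (- t).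

Lemma is_derive_fp p x : 0 < x ->
  is_derive (fp p) x (p * Rpower x (p - 1) * exp (- x) - Rpower x p * exp (- x)).
Proof. intros Hx. unfold fp.
 assert (He : is_derive (fun t => exp (- t)) x (- exp (- x))).
 { auto_derive; auto. ring. }
 pose proof (is_derive_mult (fun t => Rpower t p) (fun t => exp (- t)) x
   (p * Rpower x (p - 1)) (- exp (- x)) (is_derive_Rpower p x Hx) He (fun n m => Rmult_comm n m)) as H.
 replace (p * Rpower x (p - 1) * exp (- x) - Rpower x p * exp (- x))
   with (plus (mult (p * Rpower x (p - 1)) (exp (- x))) (mult (Rpower x p) (- exp (- x)))).
 apply H. unfold plus, mult; simpl. ring. Qed.

Lemma cont_fp p x : 0 < x -> continuous (fp p) x.
Proof. intros Hx. apply ex_derive_cont_R. eexists. apply is_derive_fp; auto. Qed.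

Lemma Rpower_le1 u p : 0 < u <= 1 -> 0 <= p -> Rpower u p <= 1.
Proof. intros Hu Hp. unfold Rpower. rewrite <- exp_0. apply exp_le.
 assert (ln u <= 0). { rewrite <- ln_1. destruct (Req_dec u 1). subst; lra. left; apply ln_increasing; lra. }
 nra. Qed.

Lemma Rpower_le_self u q : 0 < u <= 1 -> 1 <= q -> Rpower u q <= u.
Proof. intros Hu Hq. unfold Rpower. rewrite <- (exp_ln u) at 2 by lra. apply exp_le.
 assert (ln u <= 0). { rewrite <- ln_1. destruct (Req_dec u 1). subst; lra. left; apply ln_increasing; lra. }
 nra. Qed.

Lemma Rpower_le_1t t p : 0 < t -> 0 <= p <= 1 -> Rpower t p <= 1 + t.
Proof. intros Ht Hp. destruct (Rle_dec t 1).
 - pose proof (Rpower_le1 t p ltac:(lra) ltac:(lra)). lra.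
 - assert (Rpower t p <= Rpower t 1) by (apply Rle_Rpower; lra). rewrite Rpower_1 in H by lra. lra.
Qed.

Lemma exp_neg_le1 t : 0 <= t -> exp (- t) <= 1.
Proof. intros. rewrite <- exp_0. apply exp_le. lra. Qed.

Lemma Ig_base_ex p : 0 <= p <= 1 -> ex_RInt_gen (fp p) (at_right 0) (Rbar_locally p_infty).
Proof. intros Hp. apply (monotone_ex _ 2).
 - intros; apply cont_fp; auto.
 - intros x Hx. unfold fp. apply Rmult_le_pos; [left; apply Rpow_pos|left; apply exp_pos].
 - intros a b Ha Hab.
   set (G := fun t => - ((2 + t) * exp (- t))).
   assert (HG : is_RInt (fun t => (1 + t) * exp (- t)) a b (minus (G b) (G a))).
   { apply (is_RInt_derive (V:=R_CompleteNormedModule)).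
     - intros x _. unfold G. auto_derive; auto. ring.
     - intros x _. exact (ex_derive_cont_R (fun t => (1 + t) * exp (- t)) x ltac:(auto_derive; auto)). }
   assert (Hex : ex_RInt (fp p) a b).
   { apply (ex_RInt_continuous (V:=R_CompleteNormedModule)). intros z Hz. apply cont_fp.
     rewrite Rmin_left in Hz by lra. lra. }
   eapply Rle_trans.
   + apply (RInt_le (fp p) (fun t => (1 + t) * exp (- t))); auto. eexists; eauto.
     intros x Hx. unfold fp. apply Rmult_le_compat_r. left; apply exp_pos. apply Rpower_le_1t; lra.
   + rewrite (is_RInt_unique _ _ _ _ HG). unfold minus, plus, opp, G; simpl.
     pose proof (exp_pos (-b)). pose proof (exp_pos (-a)).
     assert ((2 + a) * exp (- a) <= 2).
     { pose proof (exp_ineq1_le a). rewrite exp_Ropp.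
       apply (Rmult_le_reg_r (exp a)); [apply exp_pos|]. rewrite Rmult_assoc, Rinv_l by (apply Rgt_not_eq, exp_pos). lra. }
     nra.
Qed.
Lemma lim0 q : 1 <= q -> filterlim (fun t => - (Rpower t q * exp (- t))) (at_right 0) (locally 0).
Proof. intros Hq. apply filterlim_locally. intros eps.
 eapply filter_imp; [|apply (FA_lt (Rmin eps 1)); apply Rmin_glb_lt; [apply cond_pos|lra]].
 intros t [Ht1 Ht2]. apply ball_R.
 assert (Ht3 : t < eps) by (eapply Rlt_le_trans; [apply Ht2|apply Rmin_l]).
 assert (Ht4 : t <= 1) by (left; eapply Rlt_le_trans; [apply Ht2|apply Rmin_r]).
 pose proof (Rpower_le_self t q ltac:(lra) Hq). pose proof (Rpow_pos t q).
 pose proof (exp_neg_le1 t ltac:(lra)). pose proof (exp_pos (-t)).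
 rewrite Rminus_0_r, Rabs_Ropp, Rabs_pos_eq by nra. nra. Qed.

Lemma liminf q : 1 <= q -> filterlim (fun t => - (Rpower t q * exp (- t))) (Rbar_locally p_infty) (locally 0).
Proof. intros Hq. apply filterlim_locally. intros eps. pose proof (cond_pos eps) as He.
 exists (4 * q * q / eps + 4 * q * q + 1). intros t Ht. apply ball_R.
 assert (H4 : 0 < 4 * q * q / eps) by (apply Rdiv_lt_0_compat; nra).
 assert (Htp : 0 < t) by nra.
 set (u := t * exp (- t / q)).
 assert (Hu0 : 0 < u) by (unfold u; pose proof (exp_pos (-t/q)); nra).
 assert (Heq : Rpower t q * exp (- t) = Rpower u q).
 { unfold u. rewrite <- Rpower_mult_distr by (auto; apply exp_pos). f_equal.
   unfold Rpower. rewrite ln_exp. f_equal. field. lra. }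
 assert (Hub : u <= 4 * q * q / t).
 { unfold u. assert (E : exp (t / q) = exp (t / (2 * q)) * exp (t / (2 * q))).
   { rewrite <- exp_plus. f_equal. field. lra. }
   pose proof (exp_ineq1_le (t / (2 * q))).
   assert (Hq2 : 0 < t / (2 * q)) by (apply Rdiv_lt_0_compat; lra).
   assert (Hb : (t / (2 * q)) * (t / (2 * q)) <= exp (t / q)) by (rewrite E; nra).
   replace (- t / q) with (- (t / q)) by (field; lra). rewrite exp_Ropp.
   assert (0 < exp (t / q)) by apply exp_pos.
   apply (Rmult_le_reg_r (exp (t / q) * t)); [nra|].
   replace (t * / exp (t / q) * (exp (t / q) * t)) with (t * t) by (field; lra).
   replace (4 * q * q / t * (exp (t / q) * t)) with (4 * q * q * exp (t / q)) by (field; lra).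
   assert (E2 : t / (2 * q) * (t / (2 * q)) = t * t / (4 * q * q)) by (field; lra).
   rewrite E2 in Hb. apply (Rmult_le_compat_l (4 * q * q)) in Hb; [|nra].
   replace (4 * q * q * (t * t / (4 * q * q))) with (t * t) in Hb by (field; lra). lra. }
 assert (Hlt1 : 4 * q * q / t < 1).
 { apply (Rmult_lt_reg_r t); auto. unfold Rdiv; rewrite Rmult_assoc, Rinv_l by lra. nra. }
 assert (Hlte : 4 * q * q / t < eps).
 { apply (Rmult_lt_reg_r t); auto. unfold Rdiv; rewrite Rmult_assoc, Rinv_l by lra.
   assert (4 * q * q / eps < t) by nra. apply (Rmult_lt_compat_l eps) in H; auto.
   unfold Rdiv in H. replace (eps * (4 * q * q * / eps)) with (4 * q * q) in H by (field; lra). lra. }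
 pose proof (Rpower_le_self u q ltac:(lra) Hq). pose proof (Rpow_pos u q).
 rewrite Rminus_0_r, Rabs_Ropp, Heq, Rabs_pos_eq by lra. lra. Qed.

Lemma IBP p l : 0 <= p ->
  is_RInt_gen (fp p) (at_right 0) (Rbar_locally p_infty) l ->
  is_RInt_gen (fp (p + 1)) (at_right 0) (Rbar_locally p_infty) ((p + 1) * l).
Proof. intros Hp Hl.
 set (h := fun t => Rpower t (p + 1) * exp (- t) - (p + 1) * (Rpower t p * exp (- t))).
 assert (Hh : is_RInt_gen h (at_right 0) (Rbar_locally p_infty) (0 - 0)).
 { apply (gen_FTC (fun t => - (Rpower t (p + 1) * exp (- t)))).
   - intros x Hx. unfold h.
     pose proof (is_derive_opp _ _ _ (is_derive_fp (p + 1) x Hx)) as H. unfold fp in H.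
     replace (p + 1 - 1) with p in H by ring.
     replace (Rpower x (p + 1) * exp (- x) - (p + 1) * (Rpower x p * exp (- x))) with (opp ((p + 1) * Rpower x p * exp (- x) - Rpower x (p + 1) * exp (- x)))
       by (unfold opp; simpl; ring).
     exact H.
   - intros x Hx. unfold h.
     exact (continuous_minus (K:=R_AbsRing) (V:=R_NormedModule) (fp (p + 1)) (fun t => scal (p + 1) (fp p t)) x
       (cont_fp (p + 1) x Hx) (continuous_scal_r (K:=R_AbsRing) (V:=R_NormedModule) (p + 1) (fp p) x (cont_fp p x Hx))).
   - apply lim0; lra.
   - apply liminf; lra. }
 pose proof (is_RInt_gen_plus _ _ _ _ Hh (is_RInt_gen_scal _ (p + 1) _ Hl)) as H.
 replace ((p + 1) * l) with (plus (0 - 0) (scal (p + 1) l)) by (unfold plus, scal; simpl; unfold mult; simpl; ring).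
 eapply is_RInt_gen_ext; [|apply H]. apply filter_forall. intros ab x _.
 unfold plus, scal, h, fp; simpl; unfold mult; simpl. ring.
Qed.
Lemma Ig0_is : is_RInt_gen (fp 0) (at_right 0) (Rbar_locally p_infty) 1.
Proof.
 replace 1 with (0 - (-1)) by ring.
 apply (gen_FTC (fun t => - exp (- t))).
 - intros x Hx. unfold fp. rewrite Rpower_O by auto. auto_derive; auto. ring.
 - intros; apply cont_fp; auto.
 - apply filterlim_locally. intros eps.
   eapply filter_imp; [|apply (FA_lt eps); apply cond_pos].
   intros t [Ht1 Ht2]. apply ball_R.
   pose proof (exp_ineq1_le (-t)). pose proof (exp_neg_le1 t ltac:(lra)).
   rewrite Rabs_pos_eq by lra. lra.
 - apply filterlim_locally. intros eps. pose proof (cond_pos eps).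
   exists (/ eps). intros t Ht. apply ball_R.
   assert (0 < t) by (pose proof (Rinv_0_lt_compat eps H); lra).
   pose proof (exp_ineq1_le t). pose proof (exp_pos (-t)).
   rewrite Rminus_0_r, Rabs_Ropp, Rabs_pos_eq by lra. rewrite exp_Ropp.
   apply (Rmult_lt_reg_r (exp t)); [apply exp_pos|]. rewrite Rinv_l by (apply Rgt_not_eq, exp_pos).
   apply (Rmult_lt_compat_l eps) in Ht; auto. rewrite Rinv_r in Ht by lra. nra.
Qed.

Lemma Ig_ex p : 0 <= p -> ex_RInt_gen (fp p) (at_right 0) (Rbar_locally p_infty).
Proof. intros Hp.
 assert (Hn : forall n q, 0 <= q <= INR n + 1 -> ex_RInt_gen (fp q) (at_right 0) (Rbar_locally p_infty)).
 { induction n; intros q Hq.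
   - apply Ig_base_ex. simpl in Hq; lra.
   - destruct (Rle_dec q 1). apply Ig_base_ex; lra.
     destruct (IHn (q - 1)) as [l Hl]. rewrite S_INR in Hq. lra.
     exists ((q - 1 + 1) * l). replace q with (q - 1 + 1) at 1 by ring. apply IBP; auto. lra. }
 destruct (INR_archimed 1 p ltac:(lra)) as [n Hn']. apply (Hn n). lra.
Qed.

Definition Ig (p : R) : R := RInt_gen (fp p) (at_right 0) (Rbar_locally p_infty).

Lemma Ig_is p : 0 <= p -> is_RInt_gen (fp p) (at_right 0) (Rbar_locally p_infty) (Ig p).
Proof. intros Hp. unfold Ig. apply (RInt_gen_correct (V:=R_CompleteNormedModule)). apply Ig_ex; auto. Qed.

Lemma Ig_uniq p l : is_RInt_gen (fp p) (at_right 0) (Rbar_locally p_infty) l -> Ig p = l.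
Proof. intros H. unfold Ig. apply (is_RInt_gen_unique (V:=R_CompleteNormedModule)); auto. Qed.

Lemma Ig_rec p : 0 <= p -> Ig (p + 1) = (p + 1) * Ig p.
Proof. intros Hp. apply Ig_uniq. apply IBP; auto. apply Ig_is; auto. Qed.

Lemma Ig_0 : Ig 0 = 1.
Proof. apply Ig_uniq. apply Ig0_is. Qed.

Lemma Ig_nat m : Ig (INR m) = INR (fact m).
Proof. induction m. simpl. apply Ig_0.
 rewrite S_INR, Ig_rec by apply pos_INR. rewrite IHm, fact_simpl, mult_INR, S_INR. reflexivity. Qed.
Lemma amgm y b : 0 < y -> 0 <= b <= 1 -> Rpower y b <= (1 - b) + b * y.
Proof. intros Hy Hb. unfold Rpower. set (L := ln y). set (m := b * L).
 pose proof (exp_ineq1_le (L - m)) as E1. pose proof (exp_ineq1_le (- m)) as E2.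
 assert (E1' : exp m * (1 + (L - m)) <= y).
 { rewrite <- (exp_ln y Hy). fold L. replace L with (m + (L - m)) at 2 by ring. rewrite exp_plus.
   apply Rmult_le_compat_l; [left; apply exp_pos|auto]. }
 assert (E2' : exp m * (1 - m) <= 1).
 { replace 1 with (exp m * exp (- m)) at 2 by (rewrite <- exp_plus; replace (m + - m) with 0 by ring; apply exp_0).
   apply Rmult_le_compat_l; [left; apply exp_pos|lra]. }
 assert (exp m = (1 - b) * (exp m * (1 - m)) + b * (exp m * (1 + (L - m)))) by (unfold m; ring).
 nra. Qed.

Lemma Ig_shift a n : 0 <= a -> Ig (a + INR n) = Ig a * rr (1 + a) n * INR (fact n).
Proof. intros Ha. induction n.
 - simpl. rewrite Rplus_0_r. ring.
 - rewrite S_INR. replace (a + (INR n + 1)) with ((a + INR n) + 1) by ring.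
   rewrite Ig_rec by (pose proof (pos_INR n); lra). rewrite IHn.
   change (rr (1 + a) (S n)) with (rr (1 + a) n * (1 + a + INR n) / INR (S n)).
   rewrite fact_simpl, mult_INR, S_INR. field. pose proof (pos_INR n); lra.
Qed.

Lemma fact_bound n l : INR (fact (n + l)) <= INR (fact n) * INR (n + l + 1) ^ l.
Proof. induction l.
 - rewrite Nat.add_0_r. simpl. lra.
 - replace (n + S l)%nat with (S (n + l)) by lia. set (m := (n + l)%nat) in *.
   rewrite fact_simpl, mult_INR.
   replace (INR (S m + 1)) with (INR m + 2) by (rewrite plus_INR, S_INR; simpl; ring).
   replace (INR (m + 1)) with (INR m + 1) in IHl by (rewrite plus_INR; simpl; ring).
   rewrite S_INR. simpl pow.
   pose proof (INR_fact_lt_0 n). pose proof (pos_INR m).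
   assert ((INR m + 1) ^ l <= (INR m + 2) ^ l) by (apply pow_incr; lra).
   assert (0 <= (INR m + 1) ^ l) by (apply pow_le; lra).
   assert (INR (fact m) <= INR (fact n) * (INR m + 2) ^ l).
   { eapply Rle_trans; [apply IHl|]. apply Rmult_le_compat_l; lra. }
   nra.
Qed.

Lemma Rpower_inv x b : 0 < x -> Rpower (/ x) b = / Rpower x b.
Proof. intros Hx. unfold Rpower. rewrite ln_Rinv by auto. rewrite <- exp_Ropp. f_equal. ring. Qed.

Lemma key_bound b l K : 0 <= b <= 1 -> (l <= K)%nat ->
  Ig (INR l * b) * rr (1 + INR l * b) (K - l) <= Rpower (INR (S K)) (INR l * b).
Proof. intros Hb HlK.
 set (a := INR l * b). set (n := (K - l)%nat). set (k := INR (S K)).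
 assert (Ha : 0 <= a) by (unfold a; pose proof (pos_INR l); nra).
 assert (Hk : 0 < k) by (unfold k; apply lt_0_INR; lia).
 assert (Hkl : 0 < k ^ l) by (apply pow_lt; auto).
 assert (Hka : 0 < Rpower k a) by apply Rpow_pos.
 set (g := fun t => Rpower k a * ((1 - b) * fp (INR n) t + b / k ^ l * fp (INR (n + l)) t)).
 assert (Hg : is_RInt_gen g (at_right 0) (Rbar_locally p_infty)
                (Rpower k a * ((1 - b) * Ig (INR n) + b / k ^ l * Ig (INR (n + l))))).
 { pose proof (Ig_is (INR n) (pos_INR n)) as H1. pose proof (Ig_is (INR (n + l)) (pos_INR _)) as H2.
   pose proof (is_RInt_gen_scal _ (1 - b) _ H1) as H1'. pose proof (is_RInt_gen_scal _ (b / k ^ l) _ H2) as H2'.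
   pose proof (is_RInt_gen_scal _ (Rpower k a) _ (is_RInt_gen_plus _ _ _ _ H1' H2')) as H.
   eapply is_RInt_gen_ext; [|apply H]. apply filter_forall. intros ab x _.
   unfold g, plus, scal; simpl; unfold mult; simpl. reflexivity. }
 assert (Hle : Ig (a + INR n) <= Rpower k a * ((1 - b) * Ig (INR n) + b / k ^ l * Ig (INR (n + l)))).
 { apply (gen_le (fp (a + INR n)) g); [|apply Ig_is; pose proof (pos_INR n); lra|auto].
   intros t Ht. unfold g, fp.
   set (y := Rpower t (INR l) / Rpower k (INR l)).
   assert (Hy : 0 < y) by (unfold y; apply Rdiv_lt_0_compat; apply Rpow_pos).
   assert (Hyb : Rpower y b = Rpower t a / Rpower k a).
   { unfold y, Rdiv. rewrite <- Rpower_mult_distr by (try apply Rinv_0_lt_compat; apply Rpow_pos).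
     rewrite Rpower_inv by apply Rpow_pos. rewrite !Rpower_mult. unfold a. reflexivity. }
   pose proof (amgm y b Hy Hb) as HA. rewrite Hyb in HA.
   assert (Hyk : y * Rpower t (INR n) = Rpower t (INR (n + l)) / k ^ l).
   { unfold y. rewrite plus_INR, Rpower_plus, (Rpower_pow l k Hk). field. lra. }
   rewrite Rpower_plus.
   pose proof (Rpow_pos t (INR n)). pose proof (exp_pos (- t)). pose proof (Rpow_pos t a).
   assert (Rpower t a <= Rpower k a * ((1 - b) + b * y)).
   { apply (Rmult_le_reg_r (/ Rpower k a)). apply Rinv_0_lt_compat; auto.
     rewrite (Rmult_comm (Rpower k a)), Rmult_assoc, Rinv_r by lra. rewrite Rmult_1_r. exact HA. }
   replace (Rpower k a * ((1 - b) * (Rpower t (INR n) * exp (- t)) + b / k ^ l * (Rpower t (INR (n + l)) * exp (- t))))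
     with (Rpower k a * ((1 - b) + b * y) * (Rpower t (INR n) * exp (- t))).
   2:{ replace (b / k ^ l * (Rpower t (INR (n + l)) * exp (- t))) with (b * (Rpower t (INR (n + l)) / k ^ l) * exp (- t)) by (field; lra).
       rewrite <- Hyk. ring. }
   rewrite <- Rmult_assoc. apply Rmult_le_compat_r; [lra|]. apply Rmult_le_compat_r; lra. }
 rewrite Ig_shift in Hle by auto. rewrite !Ig_nat in Hle.
 pose proof (fact_bound n l) as Hf. replace (n + l + 1)%nat with (S K) in Hf by (unfold n; lia). fold k in Hf.
 pose proof (INR_fact_lt_0 n) as Hn.
 assert (Hb2 : b / k ^ l * INR (fact (n + l)) <= b * INR (fact n)).
 { unfold Rdiv. rewrite Rmult_assoc. apply Rmult_le_compat_l; [lra|].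
   apply (Rmult_le_reg_l (k ^ l)); auto. rewrite <- Rmult_assoc, Rinv_r by lra. lra. }
 assert (Hfin : Ig a * rr (1 + a) n * INR (fact n) <= Rpower k a * INR (fact n)).
 { eapply Rle_trans; [apply Hle|]. apply Rmult_le_compat_l; lra. }
 apply (Rmult_le_reg_r (INR (fact n))); auto.
Qed.

Lemma Ig_lower a m : 0 <= a -> INR m <= a -> INR (fact m) - 1 <= Ig a.
Proof. intros Ha Hm.
 apply (gen_le (fun t => fp (INR m) t - fp 0 t) (fp a)).
 - intros t Ht. unfold fp. rewrite Rpower_O by auto. pose proof (exp_pos (- t)).
   pose proof (Rpow_pos t a). pose proof (Rpow_pos t (INR m)).
   destruct (Rle_dec 1 t).
   + assert (Rpower t (INR m) <= Rpower t a) by (apply Rle_Rpower; auto). nra.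
   + assert (Rpower t (INR m) <= 1) by (apply Rpower_le1; [lra|apply pos_INR]). nra.
 - rewrite <- Ig_nat, <- Ig_0. apply (is_RInt_gen_minus (fp (INR m)) (fp 0)); apply Ig_is; [apply pos_INR|lra].
 - apply Ig_is; auto.
Qed.

Lemma Ig_pos a : 0 <= a -> 0 < Ig a.
Proof. intros Ha.
 assert (E : Ig (a + 2) = (a + 2) * (a + 1) * Ig a).
 { replace (a + 2) with ((a + 1) + 1) at 1 by ring. rewrite Ig_rec by lra. rewrite Ig_rec by lra. ring. }
 pose proof (Ig_lower (a + 2) 2 ltac:(lra) ltac:(simpl; lra)). simpl in H.
 rewrite E in H. nra. Qed.
Lemma floor_ex x : 0 <= x -> exists m : nat, INR m <= x < INR m + 1.
Proof. intros Hx.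
 assert (H : forall n y, 0 <= y < INR n -> exists m : nat, INR m <= y < INR m + 1).
 { induction n; intros y Hy. simpl in Hy; lra.
   destruct (Rlt_dec y (INR n)). apply IHn; lra. exists n. rewrite S_INR in Hy. lra. }
 destruct (INR_archimed 1 x ltac:(lra)) as [n Hn]. apply (H n). lra. Qed.

Lemma ssum_le_Series a N : (forall n, 0 <= a n) -> ex_series a -> ssum a (S N) <= Series a.
Proof. intros Ha Hex. pose proof (Series_correct _ Hex) as H.
 assert (Hl : is_lim_seq (sum_n a) (Series a)) by exact H.
 rewrite <- ssum_f_R0, <- sum_n_Reals.
 apply (is_lim_seq_incr_compare (sum_n a) (Series a) Hl).
 intros n. rewrite sum_Sn. unfold plus; simpl. pose proof (Ha (S n)). lra. Qed.

Lemma Gamma_Ig s : Gamma s = Ig (s - 1).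
Proof. reflexivity. Qed.

Lemma ML_ex b z : 0 < b < 1 -> 0 <= z -> ex_series (fun l => z ^ l / Gamma (1 + INR l * b)).
Proof. intros Hb Hz.
 set (Z := Rmax 1 z). assert (HZ1 : 1 <= Z) by apply Rmax_l. assert (HZz : z <= Z) by apply Rmax_r.
 set (Q := Rpower (2 * Z) (/ b)).
 assert (HQ : 1 <= Q).
 { unfold Q. rewrite <- (Rpower_O (2 * Z)) by lra. apply Rle_Rpower; [lra|]. left; apply Rinv_0_lt_compat; lra. }
 destruct (cv_speed_pow_fact Q (/ (2 * Q)) ltac:(apply Rinv_0_lt_compat; lra)) as [M HM].
 assert (HM' : forall n, (n >= M)%nat -> 2 * Q ^ (S n) <= INR (fact n)).
 { intros n Hn. specialize (HM n Hn). unfold Rdist in HM. rewrite Rminus_0_r in HM.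
   pose proof (INR_fact_lt_0 n). assert (0 < Q ^ n) by (apply pow_lt; lra).
   rewrite Rabs_pos_eq in HM by (apply Rlt_le, Rdiv_lt_0_compat; auto).
   simpl pow. apply (Rmult_lt_compat_l (2 * Q * INR (fact n))) in HM; [|nra].
   replace (2 * Q * INR (fact n) * (Q ^ n / INR (fact n))) with (2 * (Q * Q ^ n)) in HM by (field; lra).
   replace (2 * Q * INR (fact n) * / (2 * Q)) with (INR (fact n)) in HM by (field; lra). lra. }
 destruct (INR_archimed b (INR M + 1) ltac:(lra)) as [L HL].
 apply (ex_series_incr_n _ L).
 apply (ex_series_le (K:=R_AbsRing) (V:=R_CompleteNormedModule) _ (fun k => (/ 2) ^ (L + k))).
 2:{ apply (ex_series_incr_n (fun n => (/ 2) ^ n) L). apply ex_series_geom. rewrite Rabs_pos_eq; lra. }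
 intros k. set (l := (L + k)%nat).
 assert (Hl : INR L <= INR l) by (apply le_INR; unfold l; lia).
 rewrite Gamma_Ig. replace (1 + INR l * b - 1) with (INR l * b) by ring.
 assert (Hlb : 0 <= INR l * b) by (pose proof (pos_INR l); nra).
 destruct (floor_ex _ Hlb) as [m [Hm1 Hm2]].
 assert (HmM : (m >= M)%nat).
 { assert (INR M < INR m) by nra. apply INR_lt in H. lia. }
 pose proof (HM' m HmM) as Hf.
 pose proof (Ig_lower _ m Hlb Hm1) as Hlow.
 pose proof (Ig_pos _ Hlb) as Hpos.
 assert (HQm : 1 <= Q ^ S m) by (apply pow_R1_Rle; lra).
 assert (HIg : Q ^ S m <= Ig (INR l * b)) by lra.
 assert (H2Z : (2 * Z) ^ l <= Q ^ S m).
 { rewrite <- !Rpower_pow by lra. unfold Q. rewrite Rpower_mult. apply Rle_Rpower; [lra|].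
   rewrite S_INR. apply (Rmult_le_reg_r b); [lra|]. replace (/ b * (INR m + 1) * b) with (INR m + 1) by (field; lra). lra. }
 assert (Hzl : z ^ l <= Z ^ l) by (apply pow_incr; lra).
 assert (HZl : 0 < Z ^ l) by (apply pow_lt; lra).
 assert (Hzl0 : 0 <= z ^ l) by (apply pow_le; lra).
 unfold norm; simpl; unfold abs; simpl.
 rewrite Rabs_pos_eq by (apply Rmult_le_pos; [auto|left; apply Rinv_0_lt_compat; auto]).
 fold l.
 assert (Hk : z ^ l * 2 ^ l <= Ig (INR l * b)) by (rewrite Rpow_mult_distr in H2Z; pose proof (pow_lt 2 l ltac:(lra)); nra).
 replace (z ^ l / Ig (INR l * b)) with ((z ^ l * 2 ^ l / Ig (INR l * b)) * / 2 ^ l)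
   by (field; repeat split; try lra; apply pow_nonzero; lra).
 rewrite pow_inv. rewrite <- (Rmult_1_l (/ 2 ^ l)) at 2.
 apply Rmult_le_compat_r; [left; apply Rinv_0_lt_compat, pow_lt; lra|].
 apply (Rmult_le_reg_r (Ig (INR l * b))); auto. unfold Rdiv. rewrite Rmult_assoc, Rinv_l by lra. lra.
Qed.
Lemma YY_le_ML b x N K : 0 < b < 1 -> 0 <= x ->
  YY b x N K <= mittag_leffler b (2 * x * Rpower (INR (S K)) b).
Proof. intros Hb Hx. unfold YY, mittag_leffler.
 set (R0 := Rpower (INR (S K)) b). assert (HR0 : 0 < R0) by apply Rpow_pos.
 set (z := 2 * x * R0). assert (Hz : 0 <= z) by (unfold z; nra).
 eapply Rle_trans; [|apply ssum_le_Series].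
 - apply ssum_le. intros l _. rewrite Gamma_Ig. replace (1 + INR l * b - 1) with (INR l * b) by ring.
   assert (Hlb : 0 <= INR l * b) by (pose proof (pos_INR l); nra).
   pose proof (Ig_pos _ Hlb) as Hp.
   assert (Hzl : z ^ l = (2 * x) ^ l * Rpower (INR (S K)) (INR l * b)).
   { unfold z. rewrite Rpow_mult_distr. f_equal. unfold R0. rewrite <- Rpower_pow by apply Rpow_pos.
     rewrite Rpower_mult. f_equal. ring. }
   rewrite Hzl. assert (H2x : 0 <= (2 * x) ^ l) by (apply pow_le; lra).
   destruct (Compare_dec.le_lt_dec l K) as [HlK|HlK].
   + pose proof (cc_bound b l K ltac:(lra) HlK) as Hc.
     pose proof (key_bound b l K ltac:(lra) HlK) as Hk.
     unfold Rdiv. rewrite Rmult_assoc. apply Rmult_le_compat_l; auto.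
     apply (Rmult_le_reg_r (Ig (INR l * b))); auto. rewrite Rmult_assoc, Rinv_l by lra.
     pose proof (cc_nonneg b l K ltac:(lra)). nra.
   + rewrite cc_zero by lia. rewrite Rmult_0_r. apply Rmult_le_pos.
     apply Rmult_le_pos; auto. left; apply Rpow_pos. left; apply Rinv_0_lt_compat; auto.
 - intros l. rewrite Gamma_Ig. apply Rmult_le_pos. apply pow_le; auto.
   left; apply Rinv_0_lt_compat, Ig_pos. pose proof (pos_INR l); nra.
 - apply ML_ex; auto.
Qed.

Lemma maxf_Wm f K : max_from1 f (S K) = Wm (fun i => f (S i)) K.
Proof. induction K; [reflexivity|]. change (max_from1 f (S (S K))) with (Rmax (max_from1 f (S K)) (f (S (S K)))).
 rewrite IHK. reflexivity. Qed.

Theorem corollary2p1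
  (beta T : R) (nT : nat) (g lam v : nat -> R) (Lam : R) :
  0 < beta < 1 -> 0 < T -> (0 < nT)%nat ->
  let tau := T / INR nT in
  (forall k, (k <= nT)%nat -> 0 <= g k) ->
  (forall l, (l < nT)%nat -> 0 <= lam l) ->
  (forall k, (1 <= k <= nT)%nat -> sum_f_R0 lam (k - 1) <= Lam) ->
  Rpower tau beta * (2 * Lam * (1 + beta)) <= 1 ->
  (forall k, (k <= nT)%nat -> 0 <= v k) ->
  (forall k, (1 <= k <= nT)%nat ->
     Dtau beta tau v k <=
       sum_f_R0 (fun i => lam (k - S i)%nat * v (S i)) (k - 1) + g k) ->
  forall k, (1 <= k <= nT)%nat ->
    v k <= 2 * mittag_leffler beta (2 * Lam * Rpower (INR k * tau) beta) *
           (v O + max_from1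
                    (fun m => sum_f_R0 (fun j => Rpower tau beta * varrho beta (m - j) * g j) m)
                    k).
Proof.
 intros Hb HT HnT tau Hg Hlam HLam Hsmall Hv HD k Hk.
 assert (Htau : 0 < tau) by (unfold tau; apply Rdiv_lt_0_compat; auto; apply lt_0_INR; lia).
 set (pb := Rpower tau beta). fold pb in Hsmall. assert (Hpb : 0 < pb) by apply Rpow_pos.
 assert (HLam0 : 0 <= Lam).
 { pose proof (HLam 1%nat ltac:(lia)). simpl in H. pose proof (Hlam O HnT). lra. }
 set (x := Lam * pb).
 assert (Hx : 0 <= x <= 1 / 2).
 { assert (Hx0 : 0 <= x) by (unfold x; nra).
   assert (E : pb * (2 * Lam * (1 + beta)) = 2 * x + 2 * x * beta) by (unfold x; ring).
   rewrite E in Hsmall. assert (0 <= x * beta) by nra. lra. }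
 set (N := (nT - 1)%nat). set (V := fun K => v (S K)).
 set (Gs := fun m => sum_f_R0 (fun j => pb * varrho beta (m - j) * g j) m).
 set (F := fun K => v O + max_from1 Gs (S K)).
 assert (HGs : forall m, (m <= nT)%nat -> 0 <= Gs m).
 { intros m Hm. unfold Gs. rewrite ssum_f_R0. apply ssum_nonneg. intros j Hj.
   apply Rmult_le_pos; [apply Rmult_le_pos; [lra|]|apply Hg; lia].
   rewrite varrho_rr. apply rr_nonneg; lra. }
 assert (Hrec : forall K, (K <= N)%nat ->
     V K <= F K + x * ssum (fun j => rr beta (K - j) * Wm V j) (S K)).
 { intros K HK. unfold V at 1, F.
   pose proof (conv_identity beta (fun i => v i - v O) (S K)) as Hid.
   assert (HDt : forall j, ssum (fun i => varpi beta (j - i) * (v i - v O)) (S j) = pb * Dtau beta tau v j).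
   { intros j. unfold Dtau. fold pb. rewrite ssum_f_R0. field. lra. }
   rewrite (ssum_ext _ (fun j => varrho beta (S K - j) * (pb * Dtau beta tau v j))) in Hid
     by (intros; rewrite HDt; reflexivity).
   rewrite ssum_shift in Hid.
   assert (HD0 : Dtau beta tau v O = 0) by (unfold Dtau; simpl; ring).
   rewrite HD0, Rmult_0_r, Rmult_0_r, Rplus_0_l in Hid.
   assert (Hterm : forall j, (j < S K)%nat ->
      varrho beta (S K - S j) * (pb * Dtau beta tau v (S j)) <=
      x * (rr beta (K - j) * Wm V j) + pb * rr beta (K - j) * g (S j)).
   { intros j Hj. simpl (S K - S j)%nat. rewrite varrho_rr.
     assert (Hr : 0 <= rr beta (K - j)) by (apply rr_nonneg; lra).
     pose proof (HD (S j) ltac:(unfold N in HK; lia)) as HDj.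
     replace (S j - 1)%nat with j in HDj by lia.
     rewrite ssum_f_R0 in HDj.
     rewrite (ssum_ext _ (fun i => lam (j - i)%nat * V i)) in HDj by (intros; reflexivity).
     assert (HWj : 0 <= Wm V j).
     { eapply Rle_trans; [|apply (Wm_ge V j O); lia]. unfold V. apply Hv. unfold N in HK; lia. }
     assert (Hs : ssum (fun i => lam (j - i)%nat * V i) (S j) <= Lam * Wm V j).
     { apply Rle_trans with (ssum (fun i => Wm V j * lam (j - i)%nat) (S j)).
       - apply ssum_le. intros i Hi. rewrite Rmult_comm. apply Rmult_le_compat_r.
         apply Hlam. unfold N in HK; lia. apply Wm_ge. lia.
       - rewrite ssum_scal.
         rewrite (ssum_ext _ (fun i => lam (S j - S i)%nat)) by (intros; reflexivity).
         rewrite ssum_rev. pose proof (HLam (S j) ltac:(unfold N in HK; lia)) as HL.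
         replace (S j - 1)%nat with j in HL by lia. rewrite ssum_f_R0 in HL.
         rewrite Rmult_comm. apply Rmult_le_compat_r; auto. }
     unfold x. 
     assert (Dtau beta tau v (S j) <= Lam * Wm V j + g (S j)) by lra.
     apply Rle_trans with (rr beta (K - j) * (pb * (Lam * Wm V j + g (S j)))).
     - apply Rmult_le_compat_l; auto. apply Rmult_le_compat_l; lra.
     - right; ring. }
   apply ssum_le in Hterm. rewrite ssum_plus, ssum_scal in Hterm.
   assert (HG : ssum (fun j => pb * rr beta (K - j) * g (S j)) (S K) <= max_from1 Gs (S K)).
   { rewrite maxf_Wm. eapply Rle_trans; [|apply (Wm_ge _ K K); lia]. cbv beta. unfold Gs.
     rewrite ssum_f_R0.
     rewrite (ssum_shift (fun j => pb * varrho beta (S K - j) * g j) (S K)).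
     rewrite (ssum_ext (fun i => pb * varrho beta (S K - S i) * g (S i))
        (fun j => pb * rr beta (K - j) * g (S j))) by (intros; rewrite varrho_rr; reflexivity).
     assert (0 <= pb * varrho beta (S K - 0) * g O).
     { apply Rmult_le_pos; [apply Rmult_le_pos; [lra|rewrite varrho_rr; apply rr_nonneg; lra]|apply Hg; lia]. }
     lra. }
   lra. }
 assert (Hmain := disc_gronwall beta x N V F ltac:(lra) Hx).
 assert (HVn : forall K, (K <= N)%nat -> 0 <= V K) by (intros; unfold V; apply Hv; unfold N in *; lia).
 assert (HF : forall K, (K <= N)%nat -> 0 <= F K).
 { intros K HK. unfold F. pose proof (Hv O ltac:(lia)). rewrite maxf_Wm.
   pose proof (Wm_ge (fun i => Gs (S i)) K O ltac:(lia)). simpl in H0.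
   pose proof (HGs 1%nat ltac:(lia)). lra. }
 assert (HFm : forall K, (K < N)%nat -> F K <= F (S K)).
 { intros K HK. unfold F. rewrite !maxf_Wm. pose proof (Wm_mono (fun i => Gs (S i)) K (S K) ltac:(lia)). lra. }
 specialize (Hmain HVn HF HFm Hrec (k - 1)%nat ltac:(unfold N; lia)).
 unfold V, F in Hmain. replace (S (k - 1)) with k in Hmain by lia.
 pose proof (YY_le_ML beta x N (k - 1) Hb ltac:(lra)) as HY.
 replace (S (k - 1)) with k in HY by lia.
 assert (Hz : 2 * x * Rpower (INR k) beta = 2 * Lam * Rpower (INR k * tau) beta).
 { unfold x, pb. rewrite <- Rpower_mult_distr by (auto; apply lt_0_INR; lia). ring. }
 rewrite Hz in HY.
 assert (HFk : 0 <= v O + max_from1 Gs k).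
 { pose proof (HF (k - 1)%nat ltac:(unfold N; lia)). unfold F in H. replace (S (k - 1)) with k in H by lia. auto. }
 fold pb. fold Gs.
 eapply Rle_trans; [apply Hmain|].
 apply Rle_trans with (2 * (v O + max_from1 Gs k) * mittag_leffler beta (2 * Lam * Rpower (INR k * tau) beta)).
 apply Rmult_le_compat_l; [lra| exact HY]. right; ring.
Qed.
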